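(* For every finite game $G$, $\mathcal{X}^{CCE}\subseteq\mathcal{X}^{S\text{-}NF}$; that is, for every coarse correlated equilibrium $x$ of $G$ there exists a stable $\mathbf{x}=[x_\pi]$ of the Stackelberg game $(G,N,\emptyset)$ with $x_\varnothing=x$.
   Context: A finite game is $G=(N,\{S_p\}_{p\in N},\{u_p\}_{p\in N})$ with players $N=\{1,\dots,n\}$, finite nonempty strategy sets $S_p$, and utilities $u_p:S\to\mathbb{R}$ on $S=\prod_{p\in N}S_p$; write $s=(s_p,s_{-p})$ with $s_{-p}\in S_{-p}=\prod_{q\neq p}S_q$. $\mathcal{X}=\Delta(S)$ is the set of probability distributions on $S$ and $u_p(x)=\sum_{s\in S}x(s)u_p(s)$ for $x\in\mathcal{X}$. For $P\subseteq N$, $\mathcal{X}^{CE}_P$ is the set of $x\in\mathcal{X}$ such that for every $p\in P$ and all $s_p\neq s_p'\in S_p$: $\sum_{s_{-p}\in S_{-p}} x(s_p,s_{-p})\,(u_p(s_p,s_{-p})-u_p(s_p',s_{-p}))\ge 0$; $\mathcal{X}^{CE}=\mathcal{X}^{CE}_N$ is the set of correlated equilibria of $G$. $\mathcal{X}^{CCE}$ is the set of coarse correlated equilibria of $G$: $x\in\mathcal{X}$ with $\sum_{s\in S}x(s)(u_p(s)-u_p(s_p',s_{-p}))\ge 0$ for all $p\in N$, $s_p'\in S_p$. A Stackelberg game (SG) is a triple $(G,L,F)$ with $L\cup F=N$ and $L\cap F=\emptyset$ (leaders and followers). For $P\subseteq N$, $\Pi_P$ is the set of ordered subsets of $P$ (finite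 sequences of pairwise distinct elements of $P$, including the empty sequence $\varnothing$); for $\pi\in\Pi_P$ and $p\in P$ not occurring in $\pi$, $\pi p$ is $\pi$ with $p$ appended; when used as a set, $\pi$ means its set of entries. $\mathbf{X}=\prod_{\pi\in\Pi_L}\mathcal{X}^{CE}_{\pi\cup F}$, with elements $\mathbf{x}=[x_\pi]_{\pi\in\Pi_L}$. For $\mathbf{x}\in\mathbf{X}$ and $\pi\in\Pi_L$, $x_\pi$ is stable if $u_p(x_\pi)\ge u_p(x_{\pi p})$ for all $p\in L\setminus\pi$; $\mathbf{x}$ is stable if $x_\varnothing$ is stable, and perfectly stable if $x_\pi$ is stable for every $\pi\in\Pi_L$; $\mathbf{X}^{S}$ and $\mathbf{X}^{PS}$ denote the sets of stable and perfectly stable elements of $\mathbf{X}$. $\mathcal{X}^{S\text{-}NF}=\{x_\varnothing:\mathbf{x}\in\mathbf{X}^S\}$ computed for the SG $(G,N,\emptyset)$ in which every player is a leader. *)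

(* Defs.v *)
From HB Require Import structures.
From mathcomp Require Import all_boot all_order all_algebra.
Set Implicit Arguments. Unset Strict Implicit. Unset Printing Implicit Defensive.
Import Order.TTheory GRing.Theory Num.Theory.
Local Open Scope ring_scope.

(* A finite game: players 'I_n, strategy sets S p (finite types),
   utilities u p : profile -> R. *)

Definition profile (n : nat) (S : 'I_n -> finType) : finType :=
  {dffun forall p : 'I_n, S p}.

Definition dev (n : nat) (S : 'I_n -> finType) (s : profile S) (p : 'I_n)
  (t : S p) : profile S :=
  [ffun q => @dfwith _ (fun q => S q) s p t q].

Definition is_dist (R : realFieldType) (n : nat) (S : 'I_n -> finType)
  (x : profile S -> R) : Prop :=
  (forall s, 0 <= x s) /\ \sum_(s : profile S) x s = 1.

Definition EU (R : realFieldType) (n : nat) (S : 'I_n -> finType)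
  (u : 'I_n -> profile S -> R) (p : 'I_n) (x : profile S -> R) : R :=
  \sum_(s : profile S) x s * u p s.

(* x in X^CE_P. The sum over s_{-p} of x(s_p,s_{-p})(...) is written as the
   sum over profiles s with s p = s_p. *)
Definition inCE_P (R : realFieldType) (n : nat) (S : 'I_n -> finType)
  (u : 'I_n -> profile S -> R) (P : {set 'I_n}) (x : profile S -> R) : Prop :=
  is_dist x /\
  forall p : 'I_n, p \in P -> forall a a' : S p, a != a' ->
    0 <= \sum_(s : profile S | s p == a) x s * (u p s - u p (dev s a')).

Definition inCCE (R : realFieldType) (n : nat) (S : 'I_n -> finType)
  (u : 'I_n -> profile S -> R) (x : profile S -> R) : Prop :=
  is_dist x /\
  forall (p : 'I_n) (a' : S p),
    0 <= \sum_(s : profile S) x s * (u p s - u p (dev s a')).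

(* Stackelberg game (G, L, F) with F = N \ L.  Ordered subsets of L are
   duplicate-free sequences with entries in L; a family xs assigns a
   distribution to each sequence (values at other sequences are irrelevant).
   bold x in bold X : *)
Definition inX (R : realFieldType) (n : nat) (S : 'I_n -> finType)
  (u : 'I_n -> profile S -> R) (L : {set 'I_n})
  (xs : seq 'I_n -> profile S -> R) : Prop :=
  forall pi : seq 'I_n, uniq pi -> {subset pi <= L} ->
    inCE_P u ([set q in pi] :|: ~: L) (xs pi).

Definition stable_at (R : realFieldType) (n : nat) (S : 'I_n -> finType)
  (u : 'I_n -> profile S -> R) (L : {set 'I_n})
  (xs : seq 'I_n -> profile S -> R) (pi : seq 'I_n) : Prop :=
  forall p : 'I_n, p \in L -> p \notin pi ->
    EU u p (xs (rcons pi p)) <= EU u p (xs pi).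

Definition stableX (R : realFieldType) (n : nat) (S : 'I_n -> finType)
  (u : 'I_n -> profile S -> R) (L : {set 'I_n})
  (xs : seq 'I_n -> profile S -> R) : Prop :=
  inX u L xs /\ stable_at u L xs [::].

Definition inSNF (R : realFieldType) (n : nat) (S : 'I_n -> finType)
  (u : 'I_n -> profile S -> R) (x : profile S -> R) : Prop :=
  exists xs : seq 'I_n -> profile S -> R,
    stableX u [set: 'I_n] xs /\ xs [::] = x.

(* Main.v *)
Require Import Defs.
From HB Require Import structures.
From mathcomp Require Import all_boot all_order all_algebra.
From mathcomp Require Import ring lra.
Local Open Scope ring_scope.

Section Farkas.
Set Implicit Arguments. Unset Strict Implicit. Unset Printing Implicit Defensive.
Import Order.TTheory GRing.Theory Num.Theory.

Variable R : realFieldType.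

Lemma comb_swap (I J : finType) (l : J -> R) (w : J -> I -> R) (f : I -> R) :
  \sum_i (\sum_j l j * w j i) * f i = \sum_j l j * \sum_i w j i * f i.
Proof.
under eq_bigr do rewrite mulr_suml.
rewrite exchange_big; apply: eq_bigr => j _; rewrite mulr_sumr.
by apply: eq_bigr => i _; rewrite mulrA.
Qed.

Lemma sum_delta (I : finType) (p : I) (a : R) (f : I -> R) :
  \sum_i (if i == p then a else 0) * f i = a * f p.
Proof.
rewrite (bigD1 p) //= eqxx big1 ?addr0 // => i /negbTE ->; exact: mul0r.
Qed.

Lemma lem_pos (c v t : R) : 0 < c -> -v/c <= t -> 0 <= c*t + v.
Proof.
move=> hc hb; have e : -v/c * c = -v by rewrite divfK // gt_eqF.
move: hb e; set b := -v/c => hb e; nra.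
Qed.

Lemma lem_neg (c v t : R) : c < 0 -> t <= -v/c -> 0 <= c*t + v.
Proof.
move=> hc hb; have e : -v/c * c = -v by rewrite divfK // lt_eqF.
move: hb e; set b := -v/c => hb e; nra.
Qed.

Lemma lem_pair (cp vp cq vq : R) : 0 < cp -> cq < 0 ->
  0 <= -cq*vp + cp*vq -> -vp/cp <= -vq/cq.
Proof.
move=> hp hq h.
have e1 : -vp/cp * cp = -vp by rewrite divfK // gt_eqF.
have e2 : -vq/cq * cq = -vq by rewrite divfK // lt_eqF.
move: e1 e2 h; set bp := -vp/cp; set bq := -vq/cq => e1 e2 h.
have E : -cq*vp + cp*vq = cp * (- cq) * (bq - bp).
  have -> : vp = - (bp * cp) by rewrite e1 opprK.
  have -> : vq = - (bq * cq) by rewrite e2 opprK.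
  ring.
have hpq : 0 < cp * (- cq) by rewrite mulr_gt0 // oppr_gt0.
by rewrite E pmulr_rge0 // subr_ge0 in h.
Qed.


Lemma farkas k : forall (I : finType) (C : I -> 'I_k -> R) (D : I -> R),
 (exists x : 'I_k -> R, forall i, 0 <= \sum_j C i j * x j + D i) \/
 (exists l : I -> R, (forall i, 0 <= l i) /\ (forall j, \sum_i l i * C i j = 0)
    /\ \sum_i l i * D i < 0).
Proof.
elim: k => [|k IH] I C D.
  case: (boolP [forall i, 0 <= D i]) => [/forallP H|/forallPn [i0 Hi0]].
    by left; exists (fun _ => 0) => i; rewrite big_ord0 add0r; exact: H.
  right; exists (fun i => if i == i0 then 1 else 0); split.
    by move=> i; case: eqP.
  split; first by case.
  rewrite (sum_delta i0 1 D) mul1r; by rewrite ltNge.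
pose c i := C i ord0.
pose C' i j := C i (lift ord0 j).
pose w (j : (I + I * I)%type) (i : I) : R :=
  match j with
  | inl i0 => if (c i0 == 0) && (i == i0) then 1 else 0
  | inr (p, q) => if (0 < c p) && (c q < 0) then
       (if i == p then - c q else 0) + (if i == q then c p else 0) else 0
  end.
have sw_l i0 f : \sum_i w (inl i0) i * f i = if c i0 == 0 then f i0 else 0.
  rewrite /w; case: (c i0 == 0) => /=; last by rewrite big1 // => i _; rewrite mul0r.
  by rewrite (sum_delta i0 1 f) mul1r.
have sw_r p q f : \sum_i w (inr (p, q)) i * f i =
    if (0 < c p) && (c q < 0) then - c q * f p + c p * f q else 0.
  rewrite /w; case: ((0 < c p) && (c q < 0)) => /=; last by rewrite big1 // => i _; rewrite mul0r.
  under eq_bigr do rewrite mulrDl.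
  by rewrite big_split /= (sum_delta p) (sum_delta q).
have w0 j i : 0 <= w j i.
  case: j => [i0|[p q]] /=; first by case: ifP.
  case: ifP => // /andP [hp hq].
  by rewrite addr_ge0 //; case: ifP => //; rewrite ?oppr_ge0 ?ltW.
have wc j : \sum_i w j i * c i = 0.
  case: j => [i0|[p q]]; first by rewrite sw_l; case: eqP.
  by rewrite sw_r; case: ifP => // _; ring.
pose C2 j jj := \sum_i w j i * C' i jj.
pose D2 j := \sum_i w j i * D i.
case: (IH _ C2 D2) => [[x' Hx']|[l2 [l2p [l2C l2D]]]]; last first.
  right; exists (fun i => \sum_j l2 j * w j i); split.
    by move=> i; apply: sumr_ge0 => j _; apply: mulr_ge0.
  split.
    move=> j; rewrite comb_swap.
    case: (unliftP ord0 j) => [j'|] ->.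
      exact: (l2C j').
    by rewrite big1 // => jj _; rewrite wc mulr0.
  by rewrite /= comb_swap.
pose val i := \sum_jj C' i jj * x' jj + D i.
have key j : \sum_jj C2 j jj * x' jj + D2 j = \sum_i w j i * val i.
  rewrite /C2 (comb_swap (w j) C' x') /D2 -big_split /=.
  by apply: eq_bigr => i _; rewrite mulrDr.
have HZ i : c i = 0 -> 0 <= val i.
  by move=> ci; have := Hx' (inl i); rewrite key sw_l ci eqxx.
have HPN p q : 0 < c p -> c q < 0 -> 0 <= - c q * val p + c p * val q.
  by move=> hp hq; have := Hx' (inr (p, q)); rewrite key sw_r hp hq.
pose b i := - val i / c i.
have [t Ht] : exists t, forall i, 0 <= c i * t + val i.
  case: (pickP (fun p => 0 < c p)) => [p0 Hp0|HN].
    case: (@arg_maxP _ _ I p0 (fun p => 0 < c p) b Hp0) => pm Hpm Hmax.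
    exists (b pm) => i.
    case: (ltgtP (c i) 0) => [hi|hi|hi].
    - by apply: lem_neg => //; apply: lem_pair => //; apply: HPN.
    - by apply: lem_pos => //; apply: Hmax.
    - by rewrite hi mul0r add0r; apply: HZ.
  exists (- \sum_i `|b i|) => i.
  case: (ltgtP (c i) 0) => [hi|hi|hi].
  - apply: lem_neg => //; rewrite (bigD1 i) //= opprD.
    have h1 : 0 <= \sum_(j | j != i) `|b j| by apply: sumr_ge0 => j _.
    have h2 := ler_norm (- b i); rewrite normrN in h2.
    rewrite -/(b i); lra.
  - by move: (HN i); rewrite hi.
  - by rewrite hi mul0r add0r; apply: HZ.
left; exists (fun j => if unlift ord0 j is Some j' then x' j' else t) => i.
rewrite big_ord_recl unlift_none.
under eq_bigr do rewrite liftK.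
by rewrite -addrA; apply: Ht.
Qed.


Lemma sum_enum (J : finType) (G : 'I_#|J| -> R) :
  \sum_v G v = \sum_j G (enum_rank j).
Proof. by rewrite (reindex enum_rank) //; apply: onW_bij; exact: enum_rank_bij. Qed.

Lemma ville (I J : finType) (A : I -> J -> R) :
 (forall y : I -> R, (forall i, 0 <= y i) -> exists j, 0 <= \sum_i y i * A i j) ->
 exists x : J -> R, (forall j, 0 <= x j) /\ \sum_j x j = 1 /\
    forall i, 0 <= \sum_j A i j * x j.
Proof.
move=> Hy.
pose C (r : ((J + bool) + I)%type) (v : 'I_#|J|) : R :=
  match r with
  | inl (inl j) => if enum_val v == j then 1 else 0
  | inl (inr b) => if b then 1 else -1
  | inr i => A i (enum_val v) end.
pose D (r : ((J + bool) + I)%type) : R :=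
  match r with inl (inr b) => if b then -1 else 1 | _ => 0 end.
case: (farkas C D) => [[x' Hx']|[l [lp [lC lD]]]].
  exists (fun j => x' (enum_rank j)); split; [|split].
  - move=> j; have := Hx' (inl (inl j)); rewrite addr0 sum_enum /C.
    rewrite (bigD1 j) //= enum_rankK eqxx mul1r big1 ?addr0 // => j' /negbTE.
    by rewrite enum_rankK eq_sym => ->; rewrite mul0r.
  - have h1 := Hx' (inl (inr true)); have h2 := Hx' (inl (inr false)).
    move: h1 h2; rewrite /C /D /= !sum_enum.
    have e1 : \sum_j 1 * x' (enum_rank j) = \sum_j x' (enum_rank j).
      by apply: eq_bigr => j _; rewrite mul1r.
    have e2 : \sum_j -1 * x' (enum_rank j) = - \sum_j x' (enum_rank j).
      by rewrite -sumrN; apply: eq_bigr => j _; rewrite mulN1r.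
    rewrite e1 e2 => h1 h2; lra.
  - move=> i; have := Hx' (inr i); rewrite addr0.
    have -> : \sum_v C (inr i) v * x' v = \sum_j A i j * x' (enum_rank j) => //.
    by rewrite sum_enum; apply: eq_bigr => j _; rewrite /= enum_rankK.
have [j0 Hj0] := Hy (fun i => l (inr i)) (fun i => lp (inr i)).
have := lC (enum_rank j0); rewrite /C !big_sumType big_bool /= enum_rankK.
rewrite (bigD1 j0) //= eqxx mulr1 big1 ?addr0; last first.
  by move=> j /negbTE; rewrite eq_sym => ->; rewrite mulr0.
move: lD; rewrite /D !big_sumType big_bool /= big1 ?add0r; last by move=> *; rewrite mulr0.
rewrite big1 ?addr0; last by move=> *; rewrite mulr0.
have := lp (inl (inl j0)); have := lp (inl (inr true)); have := lp (inl (inr false)).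
move: Hj0.
move=> *; lra.
Qed.


Lemma stationary (T : finType) (t0 : T) (w : T -> T -> R) :
  (forall a b, 0 <= w a b) ->
  exists q : T -> R, (forall a, 0 <= q a) /\ \sum_a q a = 1 /\
    forall b, \sum_a q a * w a b = q b * \sum_a' w b a'.
Proof.
move=> w0.
pose W b := \sum_a' w b a'.
pose M b a := w a b - (if a == b then W b else 0).
pose A (r : (bool * T)%type) a := (if r.1 then 1 else -1) * M r.2 a.
have EM x b : \sum_a M b a * x a = \sum_a x a * w a b - x b * W b.
  rewrite /M; under eq_bigr do rewrite mulrBl.
  rewrite sumrB (sum_delta b (W b) x) mulrC; congr (_ - _).
  by apply: eq_bigr => a _; rewrite mulrC.
case: (@ville _ _ A).
  move=> y y0; pose z b := y (true, b) - y (false, b).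
  case: (@arg_minP _ _ T t0 predT z isT) => a _ Hmin.
  exists a.
  have -> : \sum_r y r * A r a = \sum_b z b * M b a.
    transitivity (\sum_bb \sum_b y (bb, b) * A (bb, b) a).
      by rewrite pair_bigA; apply: eq_bigr => -[].
    rewrite big_bool /= -big_split /=; apply: eq_bigr => b _; rewrite /A /z /=; ring.
  have -> : \sum_b z b * M b a = \sum_b w a b * (z b - z a).
    rewrite /M; under eq_bigr do rewrite mulrBr.
    rewrite sumrB [X in _ - X](bigD1 a) //= eqxx [X in _ - (_ + X)]big1; last first.
      by move=> b; rewrite eq_sym => /negbTE ->; rewrite mulr0.
    under [RHS]eq_bigr do rewrite mulrBr.
    rewrite sumrB -mulr_suml addr0 -/(W a).
    have -> : \sum_b z b * w a b = \sum_b w a b * z b.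
      by apply: eq_bigr => b _; rewrite mulrC.
    ring.
  apply: sumr_ge0 => b _; apply: mulr_ge0 => //.
  by rewrite subr_ge0; apply: Hmin.
move=> x [x0 [x1 xA]]; exists x; split => //; split => // b.
have h1 := xA (true, b); have h2 := xA (false, b).
have e1 : \sum_a A (true, b) a * x a = \sum_a M b a * x a.
  by apply: eq_bigr => a _; rewrite /A /= mul1r.
have e2 : \sum_a A (false, b) a * x a = - \sum_a M b a * x a.
  by rewrite -sumrN; apply: eq_bigr => a _; rewrite /A /= mulN1r mulNr.
move: h1 h2; rewrite e1 e2 EM => h1 h2.
rewrite -/(W b); apply/eqP; rewrite -subr_eq0 eq_le; apply/andP; split; lra.
Qed.

End Farkas.

Section Game.
Set Implicit Arguments. Unset Strict Implicit. Unset Printing Implicit Defensive.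
Import Order.TTheory GRing.Theory Num.Theory.

Variables (n : nat) (S : 'I_n -> finType).

Lemma dev_at (s : profile S) p (a : S p) : dev s a p = a.
Proof. by rewrite /dev ffunE dfwith_in. Qed.

Lemma dev_out (s : profile S) p (a : S p) q : p != q -> dev s a q = s q.
Proof. by move=> h; rewrite /dev ffunE dfwith_out. Qed.

Lemma dev_dev (s : profile S) p (a b : S p) : dev (dev s a) b = dev s b.
Proof.
apply/ffunP => q; case: (eqVneq p q) => [<-|h]; first by rewrite !dev_at.
by rewrite !dev_out.
Qed.

Lemma dev_id (s : profile S) p : dev s (s p) = s.
Proof.
apply/ffunP => q; case: (eqVneq p q) => [<-|h]; first by rewrite !dev_at.
by rewrite !dev_out.
Qed.


Variable R : realFieldType.

Lemma pair_reindex p (G : profile S -> S p -> R) :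
  \sum_s \sum_(b : S p) G s b = \sum_t \sum_(b : S p) G (dev t b) (t p).
Proof.
rewrite !pair_bigA (reindex (fun st : (profile S * S p)%type => (dev st.1 st.2, st.1 p))) //=.
apply: onW_bij; exists (fun st : (profile S * S p)%type => (dev st.1 st.2, st.1 p)).
  by move=> [t b] /=; rewrite dev_dev dev_id dev_at.
by move=> [t b] /=; rewrite dev_dev dev_id dev_at.
Qed.

Lemma prod_dev (q : forall j, S j -> R) (t : profile S) p (b : S p) :
  \prod_j q j (dev t b j) = q p b * \prod_(j | j != p) q j (t j).
Proof.
rewrite (bigD1 p) //= dev_at; congr (_ * _); apply: eq_bigr => j hj.
by rewrite dev_out // eq_sym.
Qed.

Lemma prod_split (q : forall j, S j -> R) (t : profile S) p :
  \prod_j q j (t j) = q p (t p) * \prod_(j | j != p) q j (t j).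
Proof. by rewrite (bigD1 p). Qed.


Lemma hs_identity (q : forall j, S j -> R) (u : 'I_n -> profile S -> R) p
  (Y : S p -> S p -> R)
  (bal : forall b, \sum_a q p a * Y a b = q p b * \sum_a' Y b a') :
  \sum_(s : profile S) (\prod_j q j (s j)) * \sum_(b : S p) Y (s p) b * (u p s - u p (dev s b)) = 0.
Proof.
have E1 : \sum_(s : profile S) (\prod_j q j (s j)) * \sum_(b : S p) Y (s p) b * (u p s - u p (dev s b)) =
   \sum_(s : profile S) \sum_(b : S p) (\prod_j q j (s j)) * Y (s p) b * u p s
 - \sum_(s : profile S) \sum_(b : S p) (\prod_j q j (s j)) * Y (s p) b * u p (dev s b).
  rewrite -sumrB; apply: eq_bigr => s _; rewrite mulr_sumr -sumrB.
  by apply: eq_bigr => b _; ring.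
rewrite E1 (pair_reindex (fun (s : profile S) (b : S p) => (\prod_j q j (s j)) * Y (s p) b * u p (dev s b))).
apply/eqP; rewrite subr_eq0; apply/eqP; apply: eq_bigr => t _.
have -> : \sum_(b : S p) (\prod_j q j (dev t b j)) * Y (dev t b p) (t p) * u p (dev (dev t b) (t p))
  = (\prod_(j | j != p) q j (t j)) * u p t * \sum_a q p a * Y a (t p).
  rewrite mulr_sumr; apply: eq_bigr => b _.
  rewrite prod_dev dev_at dev_dev dev_id; ring.
rewrite bal (prod_split q t p) mulr_sumr mulr_sumr; apply: eq_bigr => b _; ring.
Qed.


Lemma ce_exists (hS : forall p, (0 < #|S p|)%N) (u : 'I_n -> profile S -> R) :
  exists z, inCE_P u setT z.
Proof.
pose I := {p : 'I_n & (S p * S p)%type}.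
pose tg p (a b : S p) : I := Tagged (fun p => (S p * S p)%type) (a, b).
pose A (r : I) (s : profile S) : R :=
  (if s (tag r) == (tagged r).1 then 1 else 0) *
  (u (tag r) s - u (tag r) (dev s (tagged r).2)).
case: (@ville R I (profile S) A) => [y y0|z [z0 [z1 zA]]]; last first.
  exists z; split; first by split.
  move=> p _ a a' _.
  have := zA (tg p a a').
  have -> : \sum_(s : profile S) A (tg p a a') s * z s =
     \sum_(s : profile S | s p == a) z s * (u p s - u p (dev s a')).
    rewrite [RHS]big_mkcond; apply: eq_bigr => s _; rewrite /A /=.
    by case: (s p == a) => /=; ring.
  by [].
pose Y p (a b : S p) := y (tg p a b).
have hq : forall p, exists qp : S p -> R, (forall a, 0 <= qp a) /\
    \sum_a qp a = 1 /\ forall b, \sum_a qp a * Y p a b = qp b * \sum_a' Y p b a'.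
  move=> p; case/card_gt0P: (hS p) => t0 _.
  by apply: (stationary t0) => a b; exact: y0.
have [q hq'] := fin_all_exists hq.
have hpos : forall p, exists a : S p, 0 < q p a.
  move=> p; case: (pickP (fun a => 0 < q p a)) => [a ha|hn]; first by exists a.
  exfalso; have h2 := (hq' p).2.1.
  have h1 : \sum_a q p a <= 0 by apply: sumr_le0 => a _; rewrite leNgt hn.
  by rewrite h2 in h1; lra.
have [s0 hs0] := fin_all_exists hpos.
pose sp : profile S := [ffun p => s0 p].
pose V s := \sum_r y r * A r s.
case: (pickP (fun s => 0 <= V s)) => [s hs|hn]; first by exists s.
exfalso.
have HV s : V s = \sum_p \sum_(b : S p) Y p (s p) b * (u p s - u p (dev s b)).
  transitivity (\sum_p \sum_(aa : (S p * S p)%type) y (tg p aa.1 aa.2) * A (tg p aa.1 aa.2) s).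
    by rewrite sig_big_dep; apply: eq_bigr => -[p [a b]] _.
  apply: eq_bigr => p _.
  have -> : \sum_(aa : (S p * S p)%type) y (tg p aa.1 aa.2) * A (tg p aa.1 aa.2) s =
     \sum_(a : S p) \sum_(b : S p) y (tg p a b) * A (tg p a b) s.
    by rewrite pair_bigA.
  rewrite (bigD1 (s p)) //= [X in _ + X = _]big1 ?addr0; last first.
    move=> a ha.
    have hb : (s p == a) = false.
      by apply/negP => /eqP e; move: ha; rewrite e eqxx.
    apply: big1 => b _; rewrite /A /=.
    by rewrite hb mul0r mulr0.
  by apply: eq_bigr => b _; rewrite /A /= eqxx mul1r.
pose z (s : profile S) := \prod_j q j (s j).
have Hsum : \sum_(s : profile S) z s * V s = 0.
  under eq_bigr do rewrite HV mulr_sumr.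
  rewrite exchange_big; apply: big1 => p _.
  exact: (hs_identity (Y := Y p) u (hq' p).2.2).
have : \sum_(s : profile S) z s * V s < 0.
  rewrite (bigD1 sp) //=.
  have hz : 0 < z sp by apply: prodr_gt0 => j _; rewrite ffunE; exact: hs0.
  have hv : V sp < 0 by rewrite ltNge hn.
  have h1 : z sp * V sp < 0 by rewrite pmulr_rlt0.
  have h2 : \sum_(s : profile S | s != sp) z s * V s <= 0.
    apply: sumr_le0 => s _; apply: mulr_ge0_le0.
      by apply: prodr_ge0 => j _; exact: (hq' j).1.
    by apply/ltW; rewrite ltNge hn.
  lra.
by rewrite Hsum ltxx.
Qed.


Lemma push (G : profile S -> profile S) (x f : profile S -> R) :
  \sum_(t : profile S) (\sum_(s : profile S) x s * (if G s == t then 1 else 0)) * f t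
  = \sum_(s : profile S) x s * f (G s).
Proof.
under eq_bigr do rewrite mulr_suml.
rewrite exchange_big; apply: eq_bigr => s _.
rewrite (bigD1 (G s)) //= eqxx mulr1 big1 ?addr0 // => t ht.
have -> : (G s == t) = false by apply/negP => /eqP e; move: ht; rewrite e eqxx.
by rewrite mulr0 mul0r.
Qed.

Lemma ce_mono (u : 'I_n -> profile S -> R) (P Q : {set 'I_n}) z :
  (forall q, q \in Q -> q \in P) -> inCE_P u P z -> inCE_P u Q z.
Proof. by move=> h [hd hc]; split => // q /h; exact: hc. Qed.

Lemma xp_exists (hS : forall p, (0 < #|S p|)%N) (u : 'I_n -> profile S -> R)
  (x : profile S -> R) (hx : inCCE u x) p :
  exists xp, inCE_P u [set p] xp /\ EU u p xp <= EU u p x.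
Proof.
case/card_gt0P: (hS p) => a0 _.
pose F (a : S p) := \sum_(s : profile S) x s * u p (dev s a).
case: (@arg_maxP _ _ (S p) a0 predT F isT) => as0 _ Has.
pose xp (t : profile S) := \sum_(s : profile S) x s * (if dev s as0 == t then 1 else 0).
have [[x0 x1] hcce] := hx.
exists xp; split; [split; [split|]|].
- move=> t; apply: sumr_ge0 => s _; apply: mulr_ge0 => //; by case: ifP.
- have := push (fun s : profile S => dev s as0) x (fun _ => 1).
  under eq_bigr do rewrite mulr1.
  move=> ->; under eq_bigr do rewrite mulr1; exact: x1.
- move=> q; rewrite in_set1 => /eqP -> a a' _.
  rewrite big_mkcond /=.
  have := push (fun s : profile S => dev s as0) x
    (fun t : profile S => if t p == a then u p t - u p (dev t a') else 0).
  rewrite /=.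
  have -> : \sum_(t : profile S) (if t p == a then xp t * (u p t - u p (dev t a')) else 0) =
     \sum_(t : profile S) xp t * (if t p == a then u p t - u p (dev t a') else 0).
    by apply: eq_bigr => t _; case: ifP => _ //; rewrite mulr0.
  move=> ->; under eq_bigr do rewrite dev_at dev_dev.
  case: (boolP (as0 == a)) => h; last first.
    by rewrite big1 // => s _; rewrite mulr0.
  under eq_bigr do rewrite mulrBr.
  rewrite sumrB subr_ge0; exact: Has.
- rewrite /EU (push (fun s : profile S => dev s as0) x (u p)).
  have := hcce p as0; under eq_bigr do rewrite mulrBr.
  by rewrite sumrB subr_ge0.
Qed.

End Game.


Theorem mainTheorem17 (R : realFieldType) (n : nat) (S : 'I_n -> finType)
  (hS : forall p : 'I_n, (0 < #|S p|)%N)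
  (u : 'I_n -> profile S -> R) (x : profile S -> R) :
  inCCE u x -> inSNF u x.
Proof.
move=> hx.
have [ce hce] := ce_exists hS u.
have [f hf] := fin_all_exists (xp_exists hS hx).
exists (fun pi => match pi with [::] => x | [:: p] => f p | _ => ce end).
split; last by [].
split.
  move=> pi _ _; case: pi => [|p [|p2 pi]].
  - case: hx => hd _; split => // q; rewrite !inE ?in_setT //=.
  - apply: ce_mono (hf p).1 => q; rewrite !inE ?in_setT ?orbF //=.
  - by apply: ce_mono hce => q; rewrite in_setT.
by move=> p _ _ /=; exact: (hf p).2.
Qed.
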